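(* Let $n,k\ge1$, $\mathbf{k}=(k,k,\dots,k)$ ($n$ entries), and $D\in\mathcal{D}_{\mathbf{k}}$. Then the Walking Algorithm on $(T(D),R(D))$ terminates only after it marks the smallest rank-$1$ box (the box of rank $1$ with the smallest index) and writes down its index; i.e. the last box marked is the smallest rank-$1$ box.
   Context: $N=n+nk$. $\mathcal{D}_{\mathbf{k}}$: sequences $(a_1,\dots,a_N)$ whose positive entries are the $n$ entries $k$, other entries $-1$, all partial sums $a_1+\cdots+a_{i-1}\ge0$. SW-word: $S^{k}$ for an up step, $W$ for $-1$. Filling Algorithm producing $T(D)$: $n$ columns, each with $k+1$ cells; place $1$ at top of column 1; having placed $1,\dots,i-1$, the lowest filled entry of a column is active if not in row $k+1$; if the $i$-th letter is $W$ place $i$ below the smallest active entry, otherwise at the top of the leftmost empty column; continue until $1,\dots,N$ placed. Entries of $T(D)$ are indices. Ranking Algorithm producing $R(D)$: ranks $0,\dots,k$ to column-1 indices top to bottom; for $i=2,\dots,n$, if the top index of column $i$ is $A+1$ and index $A$ has rank $a$, column $i$ gets ranks $a,\dots,a+k$ top to bottom. Among boxes of equal rank, the largest (smallest) is the one with largest (smallest) index. Walking Algorithm: go to the largest rank-$0$ box, mark it, write its index. Repeat: if the current box is in row 1, let $r$ be the rank of the bottom box of its column; otherwise let $r$ be the rank of the box directly above. If an unmarked box of rank $r$ exists, go to the unmarked rank-$r$ box with largest index, mark it and write its index; otherwise stop. *)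

(* Defs.v *)
From mathcomp Require Import all_boot all_order all_algebra.
Set Implicit Arguments. Unset Strict Implicit. Unset Printing Implicit Defensive.
Import Order.TTheory GRing.Theory Num.Theory.

(* A sequence D = (a_1,...,a_N) is stored as a seq int with a_i = D`_(i-1).
   Boxes of T(D) are identified with their indices 1..N. *)

Definition Nsize (n k : nat) : nat := n + n * k.

Definition in_Dk (n k : nat) (D : seq int) : Prop :=
  [/\ size D = Nsize n k,
      count (fun x : int => 0 < x)%R D = n,
      all (fun x : int => (0 < x)%R ==> (x == Posz k)) D,
      all (fun x : int => (x <= 0)%R ==> (x == -1)%R) D &
      forall i : nat, (i < size D)%N -> (0 <= \sum_(j < i) D`_j)%R].

(* A filling is a seq of n columns, each column the seq of its entries
   listed top to bottom (row 1 first). *)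

Definition active_cols (k : nat) (cols : seq (seq nat)) : seq nat :=
  [seq c <- iota 0 (size cols) |
    (0 < size (nth [::] cols c)) && (size (nth [::] cols c) <= k)].

Definition low_entry (cols : seq (seq nat)) (c : nat) : nat :=
  last 0 (nth [::] cols c).

Definition smallest_active (k : nat) (cols : seq (seq nat)) : option nat :=
  match active_cols k cols with
  | [::] => None
  | c0 :: cs => Some (foldl (fun b c =>
                  if low_entry cols c < low_entry cols b then c else b) c0 cs)
  end.

Definition fill_step (k : nat) (cols : seq (seq nat)) (i : nat) (up : bool)
  : seq (seq nat) :=
  if up then
    set_nth [::] cols (find (fun col => col == [::]) cols) [:: i]
  else match smallest_active k cols with
       | Some c => set_nth [::] cols c (rcons (nth [::] cols c) i)
       | None => cols
       end.

(* SW-word letter of a_i: S iff a_i is an up step (a_i = k > 0), W iff a_i = -1 *)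
Definition letterS (x : int) : bool := (0 < x)%R.

Definition fillT (n k : nat) (D : seq int) : seq (seq nat) :=
  foldl (fun cols (p : nat * int) => fill_step k cols p.1 (letterS p.2))
        (nseq n [::]) (zip (iota 1 (size D)) D).

(* ranks stored as a seq nat: rank of index x is rk`_x *)
Definition rank_seq (cols : seq (seq nat)) : seq nat :=
  foldl (fun rk (p : nat * seq nat) =>
           let base := if p.1 == 0 then 0 else nth 0 rk (head 0 p.2).-1 in
           foldl (fun rk' (q : nat * nat) => set_nth 0 rk' q.1 (base + q.2))
                 rk (zip p.2 (iota 0 (size p.2))))
        [::] (zip (iota 0 (size cols)) cols).

Definition rankR (n k : nat) (D : seq int) (x : nat) : nat :=
  nth 0 (rank_seq (fillT n k D)) x.

Definition col_of (cols : seq (seq nat)) (x : nat) : seq nat :=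
  nth [::] cols (find (fun col => x \in col) cols).

Definition next_rank (n k : nat) (D : seq int) (x : nat) : nat :=
  let col := col_of (fillT n k D) x in
  if index x col == 0 then rankR n k D (last 0 col)       (* row 1: bottom box *)
  else rankR n k D (nth 0 col (index x col).-1).

Definition boxes (n k : nat) : seq nat := iota 1 (Nsize n k).

(* the walk: [marked] is the list of written indices, in order *)
Fixpoint walk (n k : nat) (D : seq int) (fuel cur : nat) (marked : seq nat)
  : seq nat :=
  match fuel with
  | 0 => marked
  | f.+1 =>
      let r := next_rank n k D cur in
      let cand := [seq x <- boxes n k |
                    (rankR n k D x == r) && (x \notin marked)] in
      if cand is [::] then marked
      else walk n k D f (last 0 cand) (rcons marked (last 0 cand))
  end.

(* The full output of the Walking Algorithm. At most N boxes can ever be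
   marked, so the fuel N never cuts the walk short. *)
Definition walking_output (n k : nat) (D : seq int) : seq nat :=
  let zeros := [seq x <- boxes n k | rankR n k D x == 0] in
  if zeros is [::] then [::]
  else let x0 := last 0 zeros in walk n k D (Nsize n k) x0 [:: x0].

Definition smallest_rank1 (n k : nat) (D : seq int) : nat :=
  head 0 [seq x <- boxes n k | rankR n k D x == 1].

(* Main.v *)
Require Import Defs.
From mathcomp Require Import all_boot all_order all_algebra.
From mathcomp Require Import zify.
Set Implicit Arguments. Unset Strict Implicit. Unset Printing Implicit Defensive.

Fixpoint gwalk (bs : seq nat) (rk nx : nat -> nat) (fuel cur : nat) (marked : seq nat)
  : seq nat :=
  match fuel with
  | 0 => marked
  | f.+1 =>
      let cand := [seq x <- bs | (rk x == nx cur) && (x \notin marked)] in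
      if cand is [::] then marked
      else gwalk bs rk nx f (last 0 cand) (rcons marked (last 0 cand))
  end.

Lemma sorted_le_last (s : seq nat) y : sorted ltn s -> y \in s -> y <= last 0 s.
Proof.
elim: s y => //= a s IH y.
case: s IH => [|b s] IH /=.
  by move=> _; rewrite inE => /eqP->.
move=> /andP[ab pbs]; rewrite inE => /orP[/eqP->|ys].
  have := IH b pbs (mem_head _ _) => /= H.
  by apply: leq_trans H; apply: ltnW.
exact: IH y pbs ys.
Qed.

Lemma sorted_head_le (s : seq nat) y : sorted ltn s -> y \in s -> head 0 s <= y.
Proof.
case: s => //= a s Hp; rewrite inE => /orP[/eqP->//|ys].
have := order_path_min ltn_trans Hp => /allP /(_ _ ys) H.
exact: ltnW.
Qed.

Definition upseg (bs : seq nat) (rk : nat -> nat) (M : seq nat) :=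
  forall x y, x \in M -> y \in bs -> rk y = rk x -> x < y ->
    (y \in M) && (index y M < index x M).

Definition winv (bs : seq nat) (rk nx : nat -> nat) (x0 : nat) (t : seq nat) :=
  [/\ uniq (x0 :: t), {subset (x0 :: t) <= bs},
      path (fun a b => rk b == nx a) x0 t & upseg bs rk (x0 :: t)].

Lemma gwalk_spec bs rk nx x0 : sorted ltn bs ->
  forall f t, winv bs rk nx x0 t -> size bs < (size t).+1 + f ->
  exists t', gwalk bs rk nx f (last x0 t) (x0 :: t) = x0 :: t' /\ winv bs rk nx x0 t'
    /\ (forall y, y \in bs -> rk y = nx (last x0 t') -> y \in (x0 :: t')).
Proof.
move=> Hs; elim=> [|f IH] t [Hu Hsub Hp Hup] Hsz.
  exfalso. have := uniq_leq_size Hu Hsub. rewrite addn0 in Hsz. simpl size. lia.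
rewrite /=.
set cand := [seq x <- bs | _].
have Hc : sorted ltn cand by apply: sorted_filter => //; apply: ltn_trans.
case Ec: cand => [|c cs].
  exists t; split=> //; split=> // y yb ry.
  apply/negPn/negP => ym.
  have : y \in cand by rewrite mem_filter ry eqxx ym yb.
  by rewrite Ec.
set z := last 0 (c :: cs).
have zc : z \in cand by rewrite Ec /z; apply: mem_last.
have zmax : forall y, y \in bs -> rk y = nx (last x0 t) -> y \notin x0 :: t -> y <= z.
  move=> y yb ry ym. rewrite /z -Ec; apply: sorted_le_last => //.
  by rewrite mem_filter ry eqxx ym yb.
move: zc; rewrite mem_filter => /andP[/andP[/eqP rz zm] zb].
have := IH (rcons t z); rewrite last_rcons; apply; last by rewrite size_rcons; lia.
split.
- by rewrite -rcons_cons rcons_uniq zm Hu.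
- by move=> y; rewrite -rcons_cons mem_rcons inE => /orP[/eqP->//|]; apply: Hsub.
- by rewrite rcons_path Hp rz eqxx.
- move=> x y; rewrite -rcons_cons mem_rcons inE => /orP[/eqP->|xm] yb ry xy.
    have ym : y \in x0 :: t.
      apply/negPn/negP => ym. have := zmax y yb. rewrite ry rz => /(_ erefl ym). lia.
    rewrite mem_rcons inE ym orbT andTb.
    rewrite -!cats1 !index_cat ym (negbTE zm) /= eqxx addn0.
    by move: ym; rewrite -index_mem /=.
  have /andP[ym yx] := Hup x y xm yb ry xy.
  by rewrite mem_rcons inE ym orbT -!cats1 !index_cat ym xm.
Qed.

Lemma path_count (rk nx : nat -> nat) v x p :
  path (fun a b => rk b == nx a) x p ->
  count (fun y => rk y == v) (x :: p) + (nx (last x p) == v)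
  = (rk x == v) + count (fun y => nx y == v) (x :: p).
Proof.
elim: p x => [|y p IH] x /=; first by rewrite !addn0 addnC.
move=> /andP[/eqP ryx Hp].
have := IH y Hp => /=. rewrite ryx. lia.
Qed.

Lemma count_split (T : Type) (a b : pred T) s :
  count a s = count (fun x => a x && b x) s + count (fun x => a x && ~~ b x) s.
Proof. elim: s => //= x s ->; case: (a x); case: (b x) => /=; lia. Qed.

Lemma count_sub (P : pred nat) (M bs : seq nat) : uniq M -> uniq bs -> {subset M <= bs} ->
  count P M = count (fun x => P x && (x \in M)) bs.
Proof.
move=> uM ubs sub.
have Hp : perm_eq M [seq x <- bs | x \in M].
  apply: uniq_perm => //; first exact: filter_uniq.
  by move=> x; rewrite mem_filter; case xM: (x \in M) => //=; rewrite sub.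
by rewrite (permP Hp) count_filter.
Qed.

Lemma index_last (x0 : nat) t : uniq (x0 :: t) -> index (last x0 t) (x0 :: t) = size t.
Proof.
rewrite lastI => U. rewrite -cats1 index_cat.
have : last x0 t \notin belast x0 t.
  by move: U; rewrite -cats1 cat_uniq /= orbF andbT => /andP[].
move=> /negbTE -> /=. by rewrite eqxx addn0 size_belast.
Qed.

Lemma gwalk_main bs rk nx : sorted ltn bs ->
  (forall v, count (fun x => rk x == v) bs = count (fun x => nx x == v) bs) ->
  (forall x, x \in bs -> 0 < rk x ->
     exists y, [/\ y \in bs, y <= x, rk y = rk x & nx y = (rk x).-1]) ->
  (forall x, x \in bs -> nx x = 0 -> rk x = 1) ->
  [seq x <- bs | rk x == 0] != [::] ->
  last 0 (gwalk bs rk nx (size bs) (last 0 [seq x <- bs | rk x == 0])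
            [:: last 0 [seq x <- bs | rk x == 0]])
  = head 0 [seq x <- bs | rk x == 1].
Proof.
move=> Hs HB HT H3 Hz.
set x0 := last 0 [seq x <- bs | rk x == 0].
have ubs : uniq bs by apply: (sorted_uniq ltn_trans) => //; exact: ltnn.
have : x0 \in [seq x <- bs | rk x == 0].
  by move: Hz; rewrite /x0; case: [seq x <- bs | _] => // a l _; exact: mem_last.
rewrite mem_filter => /andP[/eqP r0 x0b].
have Hw0 : winv bs rk nx x0 [::].
  split=> //.
  - by move=> y; rewrite inE => /eqP->.
  - move=> x y; rewrite inE => /eqP -> yb ry xy; exfalso.
    have : y <= x0 by apply: sorted_le_last; [exact: (sorted_filter ltn_trans _ Hs)| rewrite mem_filter ry r0 eqxx yb].
    lia.
have [t' [-> [[Hu Hsub Hp Hup] Hstuck]]] := gwalk_spec Hs Hw0 (ltnSn _ : size bs < (size [::]).+1 + size bs).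
rewrite /= -/x0 in Hstuck *.
set M := x0 :: t' in Hu Hsub Hp Hup Hstuck *.
set z := last x0 t'.
have zM : z \in M by rewrite /z /M; apply: mem_last.
set w := nx z.
have cMrk : forall v, count (fun y => rk y == v) M = count (fun y => (rk y == v) && (y \in M)) bs.
  by move=> v; apply: count_sub.
have cMnx : forall v, count (fun y => nx y == v) M = count (fun y => (nx y == v) && (y \in M)) bs.
  by move=> v; apply: count_sub.
have Hpc := fun v => path_count v Hp.
have w0 : w = 0.
  have := Hpc w. rewrite -/z -/w eqxx r0 cMrk cMnx.
  have -> : count (fun y => (rk y == w) && (y \in M)) bs = count (fun y => rk y == w) bs.
    apply: eq_in_count => y yb /=; case E: (rk y == w) => //=; apply: Hstuck => //; exact/eqP.
  have : count (fun y => (nx y == w) && (y \in M)) bs <= count (fun y => nx y == w) bs.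
    by apply: sub_count => y /andP[].
  rewrite -HB. case: w => //= w'. lia.
have Heq : forall v, count (fun y => rk y == v) M = count (fun y => nx y == v) M.
  move=> v; have := Hpc v; rewrite -/z -/w w0 r0; case: v => [|v] /=; lia.
have allM : forall y, y \in bs -> y \in M.
  move=> y yb; apply/negPn/negP => yM.
  pose P := fun v => has (fun y => (rk y == v) && (y \notin M)) bs.
  have exP : exists v, P v by exists (rk y); apply/hasP; exists y => //; rewrite eqxx yM.
  case: (ex_minnP exP) => v /hasP [y1 y1b /andP[/eqP ry1 y1M]] vmin.
  have v0 : 0 < v.
    case: v ry1 {vmin} => // ry1. exfalso; move/negP: y1M; apply; apply: Hstuck => //. by rewrite ry1 -/w w0.
  have [y2 [y2b y2le ry2 ny2]] := HT y1 y1b ltac:(by rewrite ry1).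
  have y2M : y2 \notin M.
    apply/negP => y2M.
    have : y2 != y1 by apply/negP => /eqP E; rewrite -E y2M in y1M.
    move=> ne. have lt : y2 < y1 by rewrite ltn_neqAle ne y2le.
    have /andP[y1M' _] := Hup y2 y1 y2M y1b ltac:(by rewrite ry2) lt.
    by rewrite y1M' in y1M.
  have c1 : 0 < count (fun y => (nx y == v.-1) && ~~ (y \in M)) bs.
    by rewrite -has_count; apply/hasP; exists y2 => //; rewrite ny2 ry1 eqxx y2M.
  have c2 : 0 < count (fun y => (rk y == v.-1) && ~~ (y \in M)) bs.
    have e1 := count_split (fun y => nx y == v.-1) (fun y => y \in M) bs.
    have e2 := count_split (fun y => rk y == v.-1) (fun y => y \in M) bs.
    have e3 := HB v.-1. have e4 := Heq v.-1. rewrite cMrk cMnx in e4.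
    move: e2; rewrite e3 e1 e4 => /eqP; rewrite eqn_add2l => /eqP <-. exact: c1.
  have : P v.-1 by rewrite /P has_count.
  by move=> /vmin; rewrite leqNgt ltn_predL v0.
have rz : rk z = 1 by apply: H3; [exact: (Hsub _ zM)| exact: w0].
have m1in : head 0 [seq x <- bs | rk x == 1] \in [seq x <- bs | rk x == 1].
  have : z \in [seq x <- bs | rk x == 1] by rewrite mem_filter rz eqxx (Hsub _ zM).
  by case: [seq x <- bs | _] => //= a l _; rewrite mem_head.
set m1 := head 0 _ in m1in *.
move: (m1in); rewrite mem_filter => /andP[/eqP rm1 m1b].
have le : m1 <= z.
  apply: sorted_head_le; first exact: (sorted_filter ltn_trans _ Hs).
  by rewrite mem_filter rz eqxx (Hsub _ zM).
case: (eqVneq m1 z) => [->//|ne]; exfalso.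
have lt : m1 < z by rewrite ltn_neqAle ne le.
have /andP[_ hi] := Hup m1 z (allM _ m1b) (Hsub _ zM) ltac:(by rewrite rz rm1) lt.
have iz : index z M = size t' by apply: index_last.
have H2 : index m1 M < (size t').+1 by rewrite -[(size t').+1]/(size M) index_mem allM.
by move: (leq_trans hi H2); rewrite iz ltnn.
Qed.

Import Order.TTheory GRing.Theory Num.Theory.

Definition FP (n k : nat) (p : seq int) : seq (seq nat) :=
  foldl (fun cols (q : nat * int) => fill_step k cols q.1 (letterS q.2))
        (nseq n [::]) (zip (iota 1 (size p)) p).

Lemma FP_rcons n k p a :
  FP n k (rcons p a) = fill_step k (FP n k p) (size p).+1 (letterS a).
Proof.
have E : iota 1 (size p).+1 = rcons (iota 1 (size p)) (size p).+1.
  by rewrite -cats1 -(addn1 (size p)) iotaD add1n addn1.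
by rewrite /FP size_rcons E zip_rcons ?size_iota // foldl_rcons.
Qed.

Record finv (n k i m : nat) (cols : seq (seq nat)) : Prop := Finv {
  fi_mn : m <= n;
  fi_sz : size cols = n;
  fi_ne : forall c, c < n -> (nth [::] cols c != [::]) = (c < m);
  fi_perm : perm_eq (flatten cols) (iota 1 i);
  fi_le : forall c, size (nth [::] cols c) <= k.+1;
  fi_h0 : 0 < m -> head 0 (nth [::] cols 0) = 1;
  fi_h : forall c, 0 < c < m -> exists2 d, d < c & (head 0 (nth [::] cols c)).-1 \in nth [::] cols d }.

Lemma flatten_set_nth (s : seq (seq nat)) c v : c < size s ->
  perm_eq (flatten (set_nth [::] s c v) ++ nth [::] s c) (flatten s ++ v).
Proof.
elim: s c => [|a s IH] [|c] //= Hc.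
  by apply/permP => P; rewrite !count_cat; lia.
have := IH c Hc. move=> /permP H; apply/permP => P; move: (H P); rewrite !count_cat; lia.
Qed.

Lemma foldl_in (f : nat -> nat -> nat) c0 cs :
  (forall b c, f b c = b \/ f b c = c) -> foldl f c0 cs \in c0 :: cs.
Proof.
move=> Hf; elim: cs c0 => [|c cs IH] c0 /=; first by rewrite mem_head.
have := IH (f c0 c). rewrite inE => /orP[/eqP->|H].
  by case: (Hf c0 c) => ->; rewrite !inE eqxx ?orbT.
by rewrite !inE H !orbT.
Qed.

Lemma smallest_active_in k cols : active_cols k cols != [::] ->
  exists c, smallest_active k cols = Some c /\ c \in active_cols k cols.
Proof.
rewrite /smallest_active; case: (active_cols k cols) => // c0 cs _.
eexists; split; first reflexivity.
apply: foldl_in => b c; case: ifP; auto.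
Qed.

Lemma size_flatten_ge (s : seq (seq nat)) m b :
  (forall c, c < m -> b <= size (nth [::] s c)) -> m <= size s -> m * b <= size (flatten s).
Proof.
elim: s m => [|a s IH] [|m] //= H Hm.
rewrite size_cat mulSn; apply: leq_add; first exact: (H 0).
by apply: IH => // c Hc; apply: (H c.+1).
Qed.

Lemma perm_step (F F' col : seq nat) x i :
  perm_eq (F' ++ col) (F ++ rcons col x) -> perm_eq F (iota 1 i) -> x = i.+1 ->
  perm_eq F' (iota 1 i.+1).
Proof.
move=> /permP H1 /permP H2 Ex; subst x; apply/permP => P.
have -> : iota 1 i.+1 = rcons (iota 1 i) i.+1.
  by rewrite -cats1 -(addn1 i) iotaD add1n addn1.
have := H1 P; have := H2 P. rewrite -!cats1 !count_cat /=. lia.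
Qed.

Lemma col_grow (cols : seq (seq nat)) c' x d y : y \in nth [::] cols d ->
  y \in nth [::] (set_nth [::] cols c' (rcons (nth [::] cols c') x)) d.
Proof.
rewrite nth_set_nth /=; case: (eqVneq d c') => [->|//] H.
by rewrite mem_rcons inE H orbT.
Qed.

Lemma head_rcons_ne (s : seq nat) x : s != [::] -> head 0 (rcons s x) = head 0 s.
Proof. by case: s. Qed.

Lemma mem_flattenP (s : seq (seq nat)) y : y \in flatten s ->
  exists2 d, d < size s & y \in nth [::] s d.
Proof.
move=> /flattenP [col cs ycol]; exists (index col s); first by rewrite index_mem.
by rewrite nth_index.
Qed.

Lemma in_flatten_nth (s : seq (seq nat)) d y : y \in nth [::] s d -> y \in flatten s.
Proof.
move=> H; apply/flattenP; exists (nth [::] s d) => //; apply: mem_nth.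
by case: (ltnP d (size s)) H => // /(nth_default [::]) ->.
Qed.

Lemma find_eq (T : Type) (P : pred T) x0 (s : seq T) m : m < size s -> P (nth x0 s m) ->
  (forall c, c < m -> ~~ P (nth x0 s c)) -> find P s = m.
Proof.
elim: s m => [|a s IH] [|m] //= Hm HP Hc.
  by rewrite HP.
have := Hc 0 erefl => /= /negbTE ->; congr S.
by apply: IH => // c Hc'; apply: (Hc c.+1).
Qed.

Lemma fill_stepW n k i m cols : finv n k i m cols -> i < m * k.+1 ->
  finv n k i.+1 m (fill_step k cols i.+1 false).
Proof.
move=> [Hmn Hsz Hne Hperm Hle Hh0 Hh] Him.
have Hact : active_cols k cols != [::].
  apply/negP => /eqP Hnil.
  have Hbig : forall c, c < m -> k.+1 <= size (nth [::] cols c).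
    move=> c cm. have cn : c < n by apply: leq_trans cm Hmn.
    have nz : nth [::] cols c != [::] by rewrite Hne.
    rewrite ltnNge; apply/negP => ck.
    have : c \in active_cols k cols.
      rewrite /active_cols mem_filter mem_iota /= Hsz cn ck andbT.
      by case: (nth [::] cols c) nz.
    by rewrite Hnil.
  have := size_flatten_ge Hbig (ltac:(by rewrite Hsz) : m <= size cols).
  rewrite (perm_size Hperm) size_iota => H.
  by move: (leq_ltn_trans H Him); rewrite ltnn.
have [c' [Ec' c'in]] := smallest_active_in Hact.
move: c'in; rewrite /active_cols mem_filter mem_iota /= Hsz => /andP[/andP[c'pos c'k] c'n].
rewrite /fill_step Ec'.
set col := nth [::] cols c'.
have colne : col != [::] by rewrite /col; case: (nth [::] cols c') c'pos.
have c'm : c' < m by rewrite -Hne.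
split.
- exact: Hmn.
- by rewrite size_set_nth Hsz; apply/maxn_idPr.
- move=> c cn; rewrite nth_set_nth /=; case: (eqVneq c c') => [->|_]; last exact: Hne.
  by rewrite c'm; case: (col).
- apply: (perm_step _ Hperm) => //.
  by apply: flatten_set_nth; rewrite Hsz.
- move=> c; rewrite nth_set_nth /=; case: (eqVneq c c') => [_|_] //.
  by rewrite size_rcons.
- move=> m0; rewrite nth_set_nth /=; case: (eqVneq 0 c') => [E|_]; last exact: Hh0.
  by rewrite head_rcons_ne // /col -E Hh0.
- move=> c Hc; have [d dc Hd] := Hh c Hc; exists d => //.
  have -> : head 0 (nth [::] (set_nth [::] cols c' (rcons col i.+1)) c) = head 0 (nth [::] cols c).
    rewrite nth_set_nth /=; case: (eqVneq c c') => [E|_] //; by rewrite head_rcons_ne // /col -E.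
  exact: col_grow.

Qed.

Lemma fill_stepS n k i m cols : finv n k i m cols -> m < n -> i <= m * k.+1 ->
  finv n k i.+1 m.+1 (fill_step k cols i.+1 true).
Proof.
move=> [Hmn Hsz Hne Hperm Hle Hh0 Hh] mn Him.
have colm : nth [::] cols m = [::] by apply/eqP; apply/negPn; rewrite Hne // ltnn.
have Ef : find (fun col => col == [::]) cols = m.
  apply: (find_eq (x0 := [::])); [by rewrite Hsz| by rewrite colm|].
  move=> c cm; rewrite Hne //; exact: leq_trans cm (ltnW mn).
rewrite /fill_step Ef.
split.
- exact: mn.
- by rewrite size_set_nth Hsz; apply/maxn_idPr.
- move=> c cn; rewrite nth_set_nth /=; case: (eqVneq c m) => [->|ne]; first by rewrite ltnSn.
  by rewrite Hne // ltnS [RHS]leq_eqVlt (negbTE ne).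
- apply: (perm_step (col := [::]) _ Hperm) => //.
  by have := flatten_set_nth [:: i.+1] (ltac:(by rewrite Hsz) : m < size cols); rewrite colm.
- move=> c; rewrite nth_set_nth /=; case: (eqVneq c m) => [_|_] //.
- move=> _; rewrite nth_set_nth /=; case: (eqVneq 0 m) => [E|ne] /=.
    by move: Him; rewrite -E mul0n leqn0 => /eqP->.
  by apply: Hh0; rewrite lt0n eq_sym.
- move=> c /andP[c0 cm].
  rewrite nth_set_nth /=; case: (eqVneq c m) => [E|ne] /=.
    subst c. have m0 := c0.
    have i0 : 0 < i.
      have := Hne 0 (leq_ltn_trans (leq0n _) mn); rewrite m0 => H.
      have : 1 \in nth [::] cols 0.
        by rewrite -(Hh0 m0); case: (nth [::] cols 0) H => //= a l _; rewrite mem_head.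
      by move=> /in_flatten_nth; rewrite (perm_mem Hperm) mem_iota; lia.
    have : i \in flatten cols by rewrite (perm_mem Hperm) mem_iota; lia.
    move=> /mem_flattenP [d dsz Hd]; exists d.
      rewrite -Hne; first by case: (nth [::] cols d) Hd.
      by rewrite -Hsz.
    rewrite nth_set_nth /=; case: (eqVneq d m) => [E|//].
    by move: Hd; rewrite E colm.
  have cm' : c < m by rewrite ltn_neqAle ne -ltnS cm.
  have [d dc Hd] := Hh c (ltac:(by rewrite c0 cm')).
  exists d => //; rewrite nth_set_nth /=; case: (eqVneq d m) => [E|//].
  by move: dc; rewrite E => /(ltn_trans cm'); rewrite ltnn.
Qed.

Definition posc (p : seq int) := count (fun x : int => (0 < x)%R) p.

Lemma prefix_sum (k : nat) (D : seq int) :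
  (forall j, j < size D -> (0 < (nth 0%R D j))%R -> (nth 0%R D j) = Posz k) ->
  (forall j, j < size D -> ~~ (0 < (nth 0%R D j))%R -> (nth 0%R D j) = (-1)%R) ->
  forall i, i <= size D ->
  posc (take i D) <= i /\
  ((\sum_(j < i) (nth 0%R D j)) + Posz (i - posc (take i D)) = Posz (posc (take i D) * k))%R.
Proof.
move=> Hk H1; elim=> [|i IH] Hi.
  by rewrite big_ord0 take0.
have [IHa IHb] := IH (ltnW Hi).
rewrite big_ord_recr /= (take_nth 0%R Hi) /posc -cats1 count_cat /= addn0.
rewrite -/(posc (take i D)).
case: (boolP (0 < (nth 0%R D i))%R) => Hp /=.
  rewrite (Hk i Hi Hp). split; first by lia.
  move: IHb. set s := (\sum_(j < i) (nth 0%R D j))%R. set m := posc (take i D).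
  have -> : (i.+1 - (m + 1)) = i - m by lia.
  move=> E. rewrite mulnDl mul1n PoszD -E. 
  by rewrite -!addrA; congr (_ + _)%R; rewrite addrC.
rewrite (H1 i Hi Hp). split; first by lia.
move: IHb. set s := (\sum_(j < i) (nth 0%R D j))%R. set m := posc (take i D).
have -> : (i.+1 - (m + 0)) = (i - m).+1 by lia.
rewrite addn0 => <-. by rewrite -addn1 PoszD addrA [(s - 1 + _)%R]addrAC subrK.
Qed.

Lemma posc_take i D : posc (take i D) <= posc D.
Proof. by rewrite /posc -{2}(cat_take_drop i D) count_cat leq_addr. Qed.

Lemma fill_prefix n k D : in_Dk n k D ->
  forall i, i <= size D -> finv n k i (posc (take i D)) (FP n k (take i D)).
Proof.
move=> [Hsize Hcnt Hall1 Hall2 Hpre].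
have Hk : forall j, j < size D -> (0 < nth 0%R D j)%R -> nth 0%R D j = Posz k.
  by move=> j Hj Hp; move: (all_nthP 0%R Hall1 j Hj); rewrite Hp => /eqP.
have H1 : forall j, j < size D -> ~~ (0 < nth 0%R D j)%R -> nth 0%R D j = (-1)%R.
  move=> j Hj Hp; move: (all_nthP 0%R Hall2 j Hj); rewrite leNgt Hp => /eqP; done.
have Hps := prefix_sum Hk H1.
have Hsum0 : forall i, i <= size D -> (0 <= \sum_(j < i) nth 0%R D j)%R.
  move=> i; rewrite leq_eqVlt => /orP[/eqP Ei|]; last exact: Hpre.
  have [_ E] := Hps i (ltac:(by rewrite Ei)).
  move: E; rewrite Ei take_size -/(posc D) /posc Hcnt Hsize /Nsize.
  have -> : n + n * k - n = n * k by lia.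
  by move=> /eqP; rewrite -subr_eq0 addrK => /eqP ->.
have Hbound : forall i, i <= size D -> i <= posc (take i D) * k.+1.
  move=> i Hi; have [Hm E] := Hps i Hi.
  have : (Posz (i - posc (take i D)) <= Posz (posc (take i D) * k))%R.
    by rewrite -E lerDr; apply: Hsum0.
  rewrite lez_nat mulnS. lia.
elim=> [|i IH] Hi.
  rewrite take0 /FP /=; split => //.
  - by rewrite size_nseq.
  - by move=> c cn; rewrite nth_nseq cn.
  - by have -> : flatten (nseq n [::]) = [::] :> seq nat by elim: (n).
  - by move=> c; rewrite nth_nseq; case: ifP.
  - by move=> c /andP[_].
have Ei : take i.+1 D = rcons (take i D) (nth 0%R D i) by apply: take_nth.
have Hst : size (take i D) = i by rewrite size_take; case: ifP => //; lia.
rewrite Ei FP_rcons Hst.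
have Hc : posc (rcons (take i D) (nth 0%R D i)) = posc (take i D) + (0 < nth 0%R D i)%R.
  by rewrite /posc -cats1 count_cat /= addn0.
rewrite Hc /letterS.
case: (boolP (0 < nth 0%R D i)%R) => Hp /=.
  rewrite addn1; apply: fill_stepS.
  - exact: IH (ltnW Hi).
  - have := posc_take i.+1 D; rewrite Ei Hc Hp addn1 /posc Hcnt; done.
  - exact: Hbound (ltnW Hi).
rewrite addn0; apply: fill_stepW; first exact: IH (ltnW Hi).
have := Hbound i.+1 Hi; rewrite Ei Hc (negbTE Hp) addn0; done.
Qed.


Lemma inner_fold (rk col : seq nat) b s y : uniq col ->
  nth 0 (foldl (fun rk' (q : nat * nat) => set_nth 0 rk' q.1 (b + q.2)) rk
           (zip col (iota s (size col)))) y
  = if y \in col then b + s + index y col else nth 0 rk y.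
Proof.
elim: col rk s => [|a col IH] rk s //= /andP[aN U].
rewrite IH // nth_set_nth /= inE.
case: (eqVneq y a) => [->|ne] /=.
  by rewrite (negbTE aN) addn0.
case: ifP => // _; lia.
Qed.

Definition rstep (rk : seq nat) (p : nat * seq nat) : seq nat :=
  let base := if p.1 == 0 then 0 else nth 0 rk (head 0 p.2).-1 in
  foldl (fun rk' (q : nat * nat) => set_nth 0 rk' q.1 (base + q.2))
        rk (zip p.2 (iota 0 (size p.2))).

Lemma rank_seq_rcons s x : rank_seq (rcons s x) = rstep (rank_seq s) (size s, x).
Proof.
have E : iota 0 (size (rcons s x)) = rcons (iota 0 (size s)) (size s).
  by rewrite size_rcons -cats1 -(addn1 (size s)) iotaD.
by rewrite /rank_seq E zip_rcons ?size_iota // foldl_rcons.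
Qed.

Lemma rank_formula (s : seq (seq nat)) :
  uniq (flatten s) ->
  (forall c, 0 < c < size s ->
     exists2 d, d < c & (head 0 (nth [::] s c)).-1 \in nth [::] s d) ->
  forall c j, c < size s -> j < size (nth [::] s c) ->
  nth 0 (rank_seq s) (nth 0 (nth [::] s c) j)
  = (if c == 0 then 0 else nth 0 (rank_seq s) (head 0 (nth [::] s c)).-1) + j.
Proof.
elim/last_ind: s => [|s x IH] //.
rewrite flatten_rcons cat_uniq => /and3P[Us Hdis Ux] Hh.
have key : forall y, nth 0 (rank_seq (rcons s x)) y =
   if y \in x then (if size s == 0 then 0 else nth 0 (rank_seq s) (head 0 x).-1) + index y x
   else nth 0 (rank_seq s) y.
  by move=> y; rewrite rank_seq_rcons /rstep /= inner_fold // addn0.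
have out : forall y, y \in flatten s -> nth 0 (rank_seq (rcons s x)) y = nth 0 (rank_seq s) y.
  move=> y ys; rewrite key; case: ifP => // yx.
  by move/hasP: Hdis; case; exists y.
have inflat : forall d y, y \in nth [::] s d -> y \in flatten s.
  move=> d y H; apply/flattenP; exists (nth [::] s d) => //; apply: mem_nth.
  by case: (ltnP d (size s)) H => // /(nth_default [::]) ->.
move=> c j; rewrite size_rcons ltnS leq_eqVlt => /orP[/eqP Ec|Hc].
  subst c; rewrite nth_rcons ltnn eqxx => Hj.
  rewrite key mem_nth // index_uniq //.
  case: (eqVneq (size s) 0) => [_|ne] //.
  have := Hh (size s); rewrite nth_rcons ltnn eqxx size_rcons ltnSn andbT lt0n.
  move=> /(_ ne) [d ds Hd].
  rewrite nth_rcons ds in Hd.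
  by rewrite (out _ (inflat _ _ Hd)).
rewrite nth_rcons Hc => Hj.
have Hy : nth 0 (nth [::] s c) j \in flatten s by apply: (inflat c); apply: mem_nth.
rewrite (out _ Hy) IH //.
- case: (eqVneq c 0) => [_|ne] //.
  have := Hh c; rewrite nth_rcons Hc size_rcons (ltn_trans Hc (ltnSn _)) andbT lt0n.
  move=> /(_ ne) [d dc Hd].
  rewrite nth_rcons (ltn_trans dc Hc) in Hd.
  by rewrite (out _ (inflat _ _ Hd)).
- move=> c' /andP[c'0 c's]; have := Hh c'.
  rewrite size_rcons (ltn_trans c's (ltnSn _)) c'0 nth_rcons c's => /(_ erefl) [d dc Hd].
  by exists d => //; move: Hd; rewrite nth_rcons (ltn_trans dc c's).
Qed.


Lemma flatten_le (s : seq (seq nat)) b : (forall c, size (nth [::] s c) <= b) ->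
  size (flatten s) <= size s * b.
Proof.
elim: s => [|a s IH] //= H; rewrite size_cat mulSn leq_add //; first exact: (H 0).
by apply: IH => c; apply: (H c.+1).
Qed.

Lemma sizes_full (s : seq (seq nat)) b : (forall c, size (nth [::] s c) <= b) ->
  size (flatten s) = size s * b -> forall c, c < size s -> size (nth [::] s c) = b.
Proof.
elim: s => [|a s IH] //= H E [|c] Hc /=.
- have := flatten_le (fun c => H c.+1); have := H 0; rewrite /= size_cat mulSn in E *. lia.
- apply: IH => //; first by move=> c'; apply: (H c'.+1).
  have := flatten_le (fun c => H c.+1); have := H 0; rewrite /= size_cat mulSn in E *. lia.
Qed.

Lemma fill_final n k D : in_Dk n k D ->
  [/\ size (fillT n k D) = n, perm_eq (flatten (fillT n k D)) (iota 1 (Nsize n k)),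
      forall c, c < n -> size (nth [::] (fillT n k D) c) = k.+1,
      (0 < n -> head 0 (nth [::] (fillT n k D) 0) = 1) &
      forall c, 0 < c < n -> exists2 d, d < c &
         (head 0 (nth [::] (fillT n k D) c)).-1 \in nth [::] (fillT n k D) d].
Proof.
move=> HD; have := fill_prefix HD (leqnn (size D)).
rewrite take_size.
have -> : FP n k D = fillT n k D by [].
case: (HD) => Hsize Hcnt _ _ _.
have -> : posc D = n by [].
rewrite Hsize => [[_ Hsz _ Hperm Hle Hh0 Hh]].
split=> //.
move=> c cn; apply: sizes_full => //; last by rewrite Hsz.
by rewrite (perm_size Hperm) size_iota Hsz /Nsize mulnS.
Qed.

Lemma col_unique (s : seq (seq nat)) c1 c2 y : uniq (flatten s) ->
  c1 < size s -> c2 < size s -> y \in nth [::] s c1 -> y \in nth [::] s c2 -> c1 = c2.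
Proof.
elim: s c1 c2 => [|a s IH] // [|c1] [|c2] //=; rewrite cat_uniq => /and3P[Ua Hd Us] h1 h2 y1 y2.
- exfalso; move/hasP: Hd; apply; exists y => //. exact: (in_flatten_nth y2).
- exfalso; move/hasP: Hd; apply; exists y => //. exact: (in_flatten_nth y1).
- by congr S; apply: IH.
Qed.

Lemma walk_gwalk n k D f cur marked :
  walk n k D f cur marked = gwalk (boxes n k) (rankR n k D) (next_rank n k D) f cur marked.
Proof.
elim: f cur marked => [//|f IH] cur marked /=.
by case: [seq x <- _ | _] => // a l; apply: IH.
Qed.

Lemma arith3 b j k : 1 <= k -> b + (if j == 0 then k else j.-1) = 0 -> b + j = 1.
Proof. case: j => [|j] /=; lia. Qed.

Lemma arith_sig jx jy k : jx < k.+1 -> jy < k.+1 ->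
  (if jx == 0 then k else jx.-1) = (if jy == 0 then k else jy.-1) -> jx = jy.
Proof. case: jx => [|jx]; case: jy => [|jy] /=; lia. Qed.

Lemma col_uniq (s : seq (seq nat)) c : uniq (flatten s) -> uniq (nth [::] s c).
Proof.
elim: s c => [|a s IH] [|c] //=; rewrite cat_uniq => /and3P[Ua _ Us] //.
exact: IH.
Qed.


Theorem mainTheorem8 (n k : nat) (D : seq int) :
  (1 <= n)%N -> (1 <= k)%N -> in_Dk n k D ->
  last 0 (walking_output n k D) = smallest_rank1 n k D.
Proof.
move=> n1 k1 HD.
have [Hsz Hperm Hcs Hh0 Hh] := fill_final HD.
set cols := fillT n k D in Hsz Hperm Hcs Hh0 Hh.
have U : uniq (flatten cols) by rewrite (perm_uniq Hperm) iota_uniq.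
set R := rankR n k D.
set bs := boxes n k.
have HR : forall c p, c < n -> p < k.+1 ->
    R (nth 0 (nth [::] cols c) p) = (if c == 0 then 0 else R (head 0 (nth [::] cols c)).-1) + p.
  move=> c p cn pk; rewrite /R /rankR -/cols; apply: rank_formula => //.
  - by rewrite Hsz.
  - by rewrite Hsz.
  - by rewrite Hcs.
have find_col : forall y c, c < n -> y \in nth [::] cols c ->
    find (fun col => y \in col) cols = c.
  move=> y c cn yc.
  have hs : has (fun col => y \in col) cols.
    by apply/hasP; exists (nth [::] cols c) => //; apply: mem_nth; rewrite Hsz.
  apply: (col_unique (y := y) U); first by rewrite -has_find.
  - by rewrite Hsz.
  - exact: (nth_find [::] hs).
  - exact: yc.
have bsP : forall x, (x \in bs) = (x \in flatten cols) by move=> x; rewrite (perm_mem Hperm).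
have colx : forall x, x \in bs ->
    exists c, [/\ c < n, x \in nth [::] cols c & col_of cols x = nth [::] cols c].
  move=> x; rewrite bsP => /mem_flattenP [c cs xc]; rewrite Hsz in cs.
  by exists c; split => //; rewrite /col_of (find_col x c).
have posx : forall x, x \in bs -> exists c j, [/\ c < n, j < k.+1,
    col_of cols x = nth [::] cols c, index x (nth [::] cols c) = j &
    nth 0 (nth [::] cols c) j = x].
  move=> x xb; have [c [cn xc Ec]] := colx x xb.
  exists c, (index x (nth [::] cols c)); split => //.
  - by rewrite -(Hcs c cn) index_mem.
  - exact: nth_index.
have nxE : forall x, x \in bs -> exists c j, [/\ c < n, j < k.+1, nth 0 (nth [::] cols c) j = x,
    R x = (if c == 0 then 0 else R (head 0 (nth [::] cols c)).-1) + j &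
    next_rank n k D x = (if c == 0 then 0 else R (head 0 (nth [::] cols c)).-1) +
                          (if j == 0 then k else j.-1)].
  move=> x xb; have [c [j [cn jk Ec Ij Nj]]] := posx x xb.
  exists c, j; split => //.
  - by rewrite -Nj HR.
  rewrite /next_rank -/cols Ec Ij -/R.
  case: (eqVneq j 0) => [_|jn].
    have -> : last 0 (nth [::] cols c) = nth 0 (nth [::] cols c) k.
      by rewrite (last_nth 0) (Hcs c cn).
    by rewrite HR.
  by rewrite HR //; apply: leq_ltn_trans (leq_pred _) jk.
have H3 : forall x, x \in bs -> next_rank n k D x = 0 -> R x = 1.
  move=> x xb; have [c [j [cn jk Nj -> ->]]] := nxE x xb; exact: arith3.
have HT : forall x, x \in bs -> 0 < R x ->
    exists y, [/\ y \in bs, y <= x, R y = R x & next_rank n k D y = (R x).-1].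
  elim/ltn_ind => x IH xb Rx.
  have [c [j [cn jk Nj Rxe Nxe]]] := nxE x xb.
  case: (eqVneq j 0) => [j0|jn]; last first.
    exists x; split => //. rewrite Nxe Rxe.
    by case: j jn {Rxe Nxe jk Nj} => // j' _; rewrite addnS.
  subst j.
  case: (eqVneq c 0) => [c0|c0].
    by move: Rx; rewrite Rxe c0.
  rewrite (negbTE c0) addn0 in Rxe.
  have [d dc Hd] := Hh c (ltac:(by rewrite lt0n c0 cn)).
  have hx : head 0 (nth [::] cols c) = x by rewrite -nth0.
  rewrite hx in Hd Rxe.
  have x1b : x.-1 \in bs by rewrite bsP; exact: (in_flatten_nth Hd).
  have x1 : 0 < x by move: xb; rewrite mem_iota => /andP[].
  have [y [yb yx Ry Ny]] := IH x.-1 (ltac:(by rewrite ltn_predL)) x1b (ltac:(by rewrite -Rxe)).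
  exists y; split => //.
  - exact: leq_trans yx (leq_pred _).
  - by rewrite Ry Rxe.
  - by rewrite Ny Rxe.
set sig := fun x => let col := col_of cols x in
  if index x col == 0 then last 0 col else nth 0 col (index x col).-1.
have nxsig : forall x, next_rank n k D x = R (sig x) by move=> x; rewrite /next_rank /sig; case: ifP.
have sigE : forall x, x \in bs -> exists c j, [/\ c < n, j < k.+1, nth 0 (nth [::] cols c) j = x &
    sig x = nth 0 (nth [::] cols c) (if j == 0 then k else j.-1)].
  move=> x xb; have [c [j [cn jk Ec Ij Nj]]] := posx x xb.
  exists c, j; split => //.
  rewrite /sig /= Ec Ij; case: (eqVneq j 0) => // _.
  by rewrite (last_nth 0) (Hcs c cn).
have sig_bs : forall x, x \in bs -> sig x \in bs.
  move=> x xb; have [c [j [cn jk Nj ->]]] := sigE x xb.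
  rewrite bsP; apply: (in_flatten_nth (d := c)); apply: mem_nth; rewrite (Hcs c cn).
  by case: (j == 0) => //; apply: leq_ltn_trans (leq_pred _) jk.
have sig_inj : {in bs &, injective sig}.
  move=> x y xb yb.
  have [cx [jx [cxn jxk Nx Sx]]] := sigE x xb.
  have [cy [jy [cyn jyk Ny Sy]]] := sigE y yb.
  rewrite Sx Sy => E.
  have px : (if jx == 0 then k else jx.-1) < size (nth [::] cols cx).
    by rewrite (Hcs cx cxn); case: (jx == 0) => //; apply: leq_ltn_trans (leq_pred _) jxk.
  have py : (if jy == 0 then k else jy.-1) < size (nth [::] cols cy).
    by rewrite (Hcs cy cyn); case: (jy == 0) => //; apply: leq_ltn_trans (leq_pred _) jyk.
  have ecc : cx = cy.
    apply: (col_unique (y := nth 0 (nth [::] cols cy) (if jy == 0 then k else jy.-1)) U).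
    - by rewrite Hsz.
    - by rewrite Hsz.
    - by rewrite -E; apply: mem_nth.
    - exact: mem_nth.
  subst cy.
  have Uc := col_uniq cx U.
  have := congr1 (fun z => index z (nth [::] cols cx)) E.
  rewrite /= !index_uniq // => /arith_sig => /(_ jxk jyk) ejj.
  by rewrite -Nx -Ny ejj.
have Hperm2 : perm_eq [seq sig x | x <- bs] bs.
  have Ub : uniq bs by apply: iota_uniq.
  have Um : uniq [seq sig x | x <- bs] by rewrite map_inj_in_uniq.
  apply: uniq_perm => //.
  have sub : {subset [seq sig x | x <- bs] <= bs}.
    by move=> z /mapP [x xb ->]; apply: sig_bs.
  by have [_ E] := uniq_min_size Um sub (ltac:(by rewrite size_map)).
have HB : forall v, count (fun x => R x == v) bs = count (fun x => next_rank n k D x == v) bs.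
  move=> v; rewrite [RHS](eq_count (a2 := fun x => R (sig x) == v)); last by move=> x; rewrite /= nxsig.
  by rewrite -(count_map sig (fun y => R y == v)) (permP Hperm2).
have H4 : [seq x <- bs | R x == 0] != [::].
  have h1 : nth 0 (nth [::] cols 0) 0 = 1 by rewrite nth0 Hh0.
  have : 1 \in [seq x <- bs | R x == 0].
    rewrite mem_filter -{1}h1 HR //= /bs /boxes mem_iota /Nsize. by rewrite add1n ltnS; apply: leq_trans n1 (leq_addr _ _).
  by case: [seq x <- bs | _].
have G := gwalk_main (iota_ltn_sorted 1 (Nsize n k)) HB HT H3 H4.
rewrite /walking_output /smallest_rank1 -/bs -/R.
move: G H4; rewrite /bs /boxes size_iota.
case: [seq x <- iota 1 (Nsize n k) | R x == 0] => [//|a l] G _.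
by rewrite walk_gwalk.
Qed.
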